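(* Let $V_0$ be a nonlocal vertex algebra such that every $V_0$-module is completely reducible. Regard $V=V_0[[\hbar]]$ as an $\hbar$-adic nonlocal vertex algebra. Then for every simple $V$-module $W$ there is a simple $V_0$-module $W_0$ such that $W\cong W_0[[\hbar]]$ as $V$-modules.
   Context: Let $\hbar$ be a formal variable. A $\mathbb{C}[[\hbar]]$-module is topologically free if it is of the form $W_0[[\hbar]]$ for a complex vector space $W_0$. An ordinary nonlocal vertex algebra $V_0$ (resp. a $V_0$-module $W_0$) makes $V_0[[\hbar]]$ an $\hbar$-adic nonlocal vertex algebra (resp. $W_0[[\hbar]]$ a module over it) by $\mathbb{C}[[\hbar]]$-linear extension. A module over an $\hbar$-adic nonlocal vertex algebra is by definition topologically free. For a $\mathbb{C}[[\hbar]]$-submodule $U$ of a topologically free module $W$, set $[U]=\{w\in W:\hbar^n w\in U\text{ for some }n\ge 1\}$ and let $\overline{U}$ be its $\hbar$-adic closure. Convention: a submodule of a module $W$ over an $\hbar$-adic nonlocal vertex algebra $V$ is a $\mathbb{C}[[\hbar]]$-submodule $W_1$ stable under all operators $u_n$ ($u\in V$) such that $\overline{W_1}=W_1$ and $[W_1]=W_1$; $W$ is simple if $W\ne 0$ and its only submodules are $0$ and $W$. A $V_0$-module is completely reducible if it is a direct sum of simple $V_0$-submodules (equivalently, every submodule has a complementary submodule). *)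

(* Defs.v *)
From Stdlib Require Rdefinitions.
From mathcomp Require Import Rstruct.
From HB Require Import structures.
From mathcomp Require Import all_boot all_order all_algebra.
From mathcomp Require Import complex.

Set Implicit Arguments.
Unset Strict Implicit.
Unset Printing Implicit Defensive.

Import Order.TTheory GRing.Theory Num.Theory.
Local Open Scope ring_scope.

Definition C : fieldType := (Rdefinitions.R)[i].

Definition gbin (m : int) (k : nat) : C :=
  (\prod_(i < k) ((m - (i : nat)%:Z)%:~R : C)) / (k`!)%:R.

(* A vertex operator map  Y(u,x)w = sum_n u_n w x^{-n-1}  is encoded  *)
(* by its coefficients:  Y u w n = u_n w.                              *)
Section Ordinary.
Variables (V W : lmodType C).
Implicit Types (Y : V -> W -> int -> W).

Definition bilinearY Y :=
  forall n : int,
    (forall (a : C) u u' w, Y (a *: u + u') w n = a *: Y u w n + Y u' w n) /\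
    (forall (a : C) u w w', Y u (a *: w + w') n = a *: Y u w n + Y u w' n).

(* Y(u,x)w \in W((x)) *)
Definition truncY Y :=
  forall u w, exists N : int, forall n : int, N <= n -> Y u w n = 0.

(* Coefficient of x0^a x2^b in (x0+x2)^l Y_W(u,x0+x2) Y_W(v,x2) w,
   where Y_W(u,x0+x2) is expanded in nonnegative powers of x2; the
   sum over k is truncated at K (it is finite by truncation). *)
Definition assoc_lhs (YW : V -> W -> int -> W) (l : nat) u v w
    (a b : int) (K : nat) : W :=
  \sum_(k < K) gbin (a + (k : nat)%:Z) k *:
     YW u (YW v w ((k : nat)%:Z - 1 - b)) (l%:Z - 1 - (k : nat)%:Z - a).

(* Coefficient of x0^a x2^b in (x0+x2)^l Y_W(Y(u,x0)v,x2) w. *)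
Definition assoc_rhs (YV : V -> V -> int -> V) (YW : V -> W -> int -> W)
    (l : nat) u v w (a b : int) : W :=
  \sum_(j < l.+1) ('C(l, j))%:R *:
     YW (YV u v (l%:Z - (j : nat)%:Z - 1 - a)) w ((j : nat)%:Z - 1 - b).

Definition weak_assoc (YV : V -> V -> int -> V) (YW : V -> W -> int -> W) :=
  forall u v w, exists l : nat, forall a b : int, exists K0 : nat,
    forall K : nat, (K0 <= K)%N -> assoc_lhs YW l u v w a b K = assoc_rhs YV YW l u v w a b.

End Ordinary.

Definition is_nlva (V : lmodType C) (vac : V) (YV : V -> V -> int -> V) :=
  [/\ bilinearY YV, truncY YV,
      (forall v (n : int), YV vac v n = if n == -1 then v else 0),
      (forall v, (forall n : int, 0 <= n -> YV v vac n = 0) /\ YV v vac (-1) = v) &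
      weak_assoc YV YV].

Definition is_module (V : lmodType C) (vac : V) (YV : V -> V -> int -> V)
    (W : lmodType C) (YW : V -> W -> int -> W) :=
  [/\ bilinearY YW, truncY YW,
      (forall w (n : int), YW vac w n = if n == -1 then w else 0) &
      weak_assoc YV YW].

Section OrdSub.
Variables (V W : lmodType C) (YW : V -> W -> int -> W).

Definition submodule (S : W -> Prop) :=
  [/\ S 0, (forall x y, S x -> S y -> S (x + y)),
      (forall (a : C) x, S x -> S (a *: x)) &
      (forall u x (n : int), S x -> S (YW u x n))].

Definition simple_submodule (S : W -> Prop) :=
  [/\ submodule S, (exists x, S x /\ x <> 0) &
      forall T, submodule T -> (forall x, T x -> S x) ->
        (forall x, T x -> x = 0) \/ (forall x, S x -> T x)].

Definition simple_module := simple_submodule (fun _ => True).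

Definition completely_reducible :=
  exists (I : Type) (S : I -> W -> Prop),
    [/\ (forall i, simple_submodule (S i)),
        (forall x, exists (n : nat) (f : 'I_n -> I) (y : 'I_n -> W),
            [/\ injective f, (forall j, S (f j) (y j)) & x = \sum_(j < n) y j]) &
        (forall (n : nat) (f : 'I_n -> I) (y : 'I_n -> W),
            injective f -> (forall j, S (f j) (y j)) ->
            \sum_(j < n) y j = 0 -> forall j, y j = 0)].

End OrdSub.

(* hbar-adic setting.  A topologically free C[[h]]-module is (up to    *)
(* isomorphism) W0[[h]]; its elements are coefficient sequences.       *)
Definition hser (T : Type) := nat -> T.

Section Hadic.
Variables (W0 : lmodType C).

Definition hzero : hser W0 := fun _ => 0.
Definition hadd (x y : hser W0) : hser W0 := fun n => x n + y n.

Definition hscale (c : hser C) (x : hser W0) : hser W0 :=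
  fun n => \sum_(i < n.+1) c i *: x (n - i)%N.

Definition hpow (n : nat) : hser C := fun i => if i == n then 1 else 0.

(* x - y \in h^k W *)
Definition hcongr (k : nat) (x y : hser W0) := forall i, (i < k)%N -> x i = y i.

End Hadic.

Definition hlinear (A B : lmodType C) (f : hser A -> hser B) :=
  (forall x y, f (hadd x y) = hadd (f x) (f y)) /\
  (forall c x, f (hscale c x) = hscale c (f x)).

(* C[[h]]-linear extension of a C-bilinear vertex operator map. *)
Definition hext (V0 W0 : lmodType C) (Y : V0 -> W0 -> int -> W0)
    (u : hser V0) (w : hser W0) (n : int) : hser W0 :=
  fun i => \sum_(j < i.+1) Y (u j) (w (i - j)%N) n.

Definition hconst (V0 : lmodType C) (v : V0) : hser V0 :=
  fun i => if i == 0%N then v else 0.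

Section HModule.
Variables (V0 W : lmodType C) (vac : V0) (YV : V0 -> V0 -> int -> V0).
Variable (YW : hser V0 -> hser W -> int -> hser W).

Definition hassoc_lhs (l : nat) u v w (a b : int) (K : nat) : hser W :=
  fun i => \sum_(k < K) gbin (a + (k : nat)%:Z) k *:
     YW u (YW v w ((k : nat)%:Z - 1 - b)) (l%:Z - 1 - (k : nat)%:Z - a) i.

Definition hassoc_rhs (l : nat) u v w (a b : int) : hser W :=
  fun i => \sum_(j < l.+1) ('C(l, j))%:R *:
     YW (hext YV u v (l%:Z - (j : nat)%:Z - 1 - a)) w ((j : nat)%:Z - 1 - b) i.

Definition is_hmodule :=
  [/\ (forall n u, hlinear (fun w => YW u w n)),
      (forall n w, hlinear (fun u => YW u w n)),
      (* Y_W(u,x)w \in W((x))[[h]] *)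
      (forall u w (k : nat), exists N : int, forall n : int, N <= n ->
          hcongr k (YW u w n) (hzero W)),
      (forall w (n : int), YW (hconst vac) w n = if n == -1 then w else hzero W) &
      (forall u v w (k : nat), exists l : nat, forall a b : int, exists K0 : nat,
          forall K : nat, (K0 <= K)%N ->
            hcongr k (hassoc_lhs l u v w a b K) (hassoc_rhs l u v w a b))].

(* Submodule: C[[h]]-submodule, stable under all u_n, closed
   (h-adic closure = itself) and [S] = S. *)
Definition hsubmodule (S : hser W -> Prop) :=
  [/\ S (hzero W) /\ (forall x y, S x -> S y -> S (hadd x y)),
      (forall c x, S x -> S (hscale c x)),
      (forall u x (n : int), S x -> S (YW u x n)),
      (forall x, (forall k : nat, exists y, S y /\ hcongr k x y) -> S x) &
      (forall x (n : nat), (1 <= n)%N -> S (hscale (hpow n) x) -> S x)].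

Definition simple_hmodule :=
  (exists w, w <> hzero W) /\
  forall S, hsubmodule S -> (forall x, S x -> x = hzero W) \/ (forall x, S x).

End HModule.

Definition hmodule_iso (V0 W W' : lmodType C)
    (YW : hser V0 -> hser W -> int -> hser W)
    (YW' : hser V0 -> hser W' -> int -> hser W') :=
  exists f : hser W -> hser W',
    [/\ hlinear f, bijective f &
        forall u w (n : int), f (YW u w n) = YW' u (f w) n].

(* Main.v *)
Require Import Defs.
From HB Require Import structures.
From mathcomp Require Import all_boot all_order all_algebra.
From Stdlib Require Import FunctionalExtensionality ClassicalEpsilon Classical.
From mathcomp Require Import zify.

Set Implicit Arguments.
Unset Strict Implicit.
Unset Printing Implicit Defensive.
Import Order.TTheory GRing.Theory Num.Theory.
Local Open Scope ring_scope.

Section Sums.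
Variable R : zmodType.

Lemma sum_shift (n l : nat) (H : nat -> R) :
  \sum_(i < n) (if (l <= i)%N then H (i - l)%N else 0) = \sum_(m < n - l) H m.
Proof.
elim: n => [|n IH]; first by rewrite !big_ord0.
rewrite big_ord_recr /= IH.
case: (leqP l n) => hl.
  by rewrite subSn // big_ord_recr.
by rewrite addr0; have -> : (n.+1 - l = n - l)%N by lia.
Qed.

Lemma sum_widen (i n : nat) (F : nat -> R) : (i < n)%N ->
  \sum_(l < i.+1) F l = \sum_(l < n) (if (l <= i)%N then F l else 0).
Proof.
move=> hin; have -> : n = (i.+1 + (n - i.+1))%N by lia.
elim: (n - i.+1)%N => [|d IH].
  by rewrite addn0; apply: eq_bigr => l _; rewrite -ltnS ltn_ord.
rewrite addnS [RHS]big_ord_recr /= -IH.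
have -> : (i.+1 + d <= i)%N = false by lia.
by rewrite addr0.
Qed.

Lemma sum_tri (j : nat) (G : nat -> nat -> nat -> R) :
  \sum_(i < j.+1) \sum_(l < i.+1) G l (i - l)%N (j - i)%N =
  \sum_(l < j.+1) \sum_(m < (j - l).+1) G l m (j - l - m)%N.
Proof.
transitivity (\sum_(i < j.+1) \sum_(l < j.+1)
    (if (l <= i)%N then G l (i - l)%N (j - i)%N else 0)).
  by apply: eq_bigr => i _; apply: (sum_widen (fun l => G l (i - l)%N (j - i)%N) (ltn_ord i)).
rewrite exchange_big /=; apply: eq_bigr => l _.
transitivity (\sum_(i < j.+1)
    (if ((l:nat) <= i)%N then G l (i - l)%N (j - l - (i - l))%N else 0)).
  apply: eq_bigr => i _; case: ifP => // hli.
  by have -> : (j - i = j - l - (i - l))%N by have := ltn_ord i; lia.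
rewrite (sum_shift _ _ (fun m => G l m (j - l - m)%N)).
by have -> : (j.+1 - l = (j - l).+1)%N by have := ltn_ord l; lia.
Qed.

Lemma sum_pick (n k : nat) (F : nat -> R) :
  \sum_(i < n) (if (i == k :> nat) then F i else 0) = if (k < n)%N then F k else 0.
Proof. by rewrite -big_mkcond /= big_ord1_eq. Qed.

End Sums.

Definition cst (a : C) : hser C := fun i => if i == 0%N then a else 0.

Section HS.
Variable X : lmodType C.

Lemma hscale_pow k (x : hser X) n :
  hscale (hpow k) x n = if (k <= n)%N then x (n - k)%N else 0.
Proof.
rewrite /hscale /hpow.
transitivity (\sum_(i < n.+1) (if (i == k :> nat) then x (n - i)%N else 0)).
  by apply: eq_bigr => i _; case: eqP => _; rewrite ?scale1r ?scale0r.
by rewrite (sum_pick _ _ (fun i => x (n - i)%N)) ltnS; case: ifP.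
Qed.

Lemma hscale_cst a (x : hser X) n : hscale (cst a) x n = a *: x n.
Proof.
rewrite /hscale /cst.
transitivity (\sum_(i < n.+1) (if (i == 0%N :> nat) then a *: x (n - i)%N else 0)).
  by apply: eq_bigr => i _; case: eqP => _; rewrite ?scale0r.
by rewrite (sum_pick _ _ (fun i => a *: x (n - i)%N)) /= subn0.
Qed.

Lemma hcongr_refl k (x : hser X) : hcongr k x x. Proof. by []. Qed.
Lemma hcongr_sym k (x y : hser X) : hcongr k x y -> hcongr k y x.
Proof. by move=> h i hi; rewrite h. Qed.
Lemma hcongr_trans k (x y z : hser X) : hcongr k x y -> hcongr k y z -> hcongr k x z.
Proof. by move=> h1 h2 i hi; rewrite h1 ?h2. Qed.
Lemma hcongr_le k k' (x y : hser X) : (k <= k')%N -> hcongr k' x y -> hcongr k x y.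
Proof. by move=> hk h i hi; apply: h; apply: leq_trans hk. Qed.

Lemma hdecomp k (x y : hser X) : hcongr k x y ->
  y = hadd x (hscale (hpow k) (fun i => y (i + k)%N - x (i + k)%N)).
Proof.
move=> h; apply: functional_extensionality => i.
rewrite /hadd hscale_pow; case: leqP => hk.
  by rewrite subnK // addrC subrK.
by rewrite addr0 h.
Qed.

Lemma hpow_small k (d : hser X) i : (i < k)%N -> hscale (hpow k) d i = 0.
Proof. by move=> h; rewrite hscale_pow; case: leqP => //; lia. Qed.

End HS.

Section HLin.
Variables X Y : lmodType C.
Variable phi : hser X -> hser Y.
Hypothesis Hphi : hlinear phi.

Lemma hlin_add x y : phi (hadd x y) = hadd (phi x) (phi y).
Proof. by case: Hphi. Qed.
Lemma hlin_scale c x : phi (hscale c x) = hscale c (phi x).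
Proof. by case: Hphi. Qed.

Lemma hlin_zero : phi (hzero X) = hzero Y.
Proof.
have -> : hzero X = hscale (cst 0) (hzero X).
  by apply: functional_extensionality => i; rewrite hscale_cst scale0r.
rewrite hlin_scale; apply: functional_extensionality => i.
by rewrite hscale_cst scale0r.
Qed.

Lemma hlin_cong k x y : hcongr k x y -> hcongr k (phi x) (phi y).
Proof.
move=> h; rewrite (hdecomp h) hlin_add hlin_scale => i hi.
by rewrite /hadd hpow_small // addr0.
Qed.

Lemma hlin_sum K (F : 'I_K -> hser X) :
  phi (fun i => \sum_(j < K) F j i) = fun i => \sum_(j < K) phi (F j) i.
Proof.
elim: K F => [|K IH] F.
  have -> : (fun i => \sum_(j < 0) F j i) = hzero X.
    by apply: functional_extensionality => i; rewrite big_ord0.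
  by rewrite hlin_zero; apply: functional_extensionality => i; rewrite big_ord0.
have -> : (fun i => \sum_(j < K.+1) F j i) =
   hadd (fun i => \sum_(j < K) F (widen_ord (leqnSn K) j) i) (F ord_max).
  by apply: functional_extensionality => i; rewrite big_ord_recr.
rewrite hlin_add IH; apply: functional_extensionality => i.
by rewrite [RHS]big_ord_recr.
Qed.

Lemma hlin_expand x (e : nat -> hser X) :
  (forall j, hcongr j.+1 x (fun p => \sum_(i < j.+1) hscale (hpow i) (e i) p)) ->
  forall j, phi x j = \sum_(i < j.+1) phi (e i) (j - i)%N.
Proof.
move=> h j.
rewrite (hlin_cong (h j)) // (hlin_sum (fun i : 'I_j.+1 => hscale (hpow i) (e i))).
apply: eq_bigr => i _; rewrite hlin_scale hscale_pow.
by have := ltn_ord i; rewrite ltnS => ->.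
Qed.

End HLin.

Lemma hexpand_const (X : lmodType C) (x : hser X) j :
  hcongr j.+1 x (fun p => \sum_(i < j.+1) hscale (hpow i) (hconst (x i)) p).
Proof.
move=> p hp.
transitivity (\sum_(i < j.+1) (if (i == p :> nat) then x i else 0)).
  by rewrite (sum_pick _ _ x) hp.
apply: eq_bigr => i _; rewrite hscale_pow /hconst.
case: (leqP i p) => hip; case: eqP => hi.
- by rewrite hi subnn.
- by have -> : (p - i == 0)%N = false by apply/negP; lia.
- by lia.
- by [].
Qed.

Lemma bilin_0l (V M : lmodType C) (Y : V -> M -> int -> M) :
  bilinearY Y -> forall w n, Y 0 w n = 0.
Proof.
move=> hb w n; have [h1 _] := hb n; have := h1 1 0 0 w.
rewrite !scale1r addr0 => e.
by apply/(addrI (Y 0 w n)); rewrite addr0 -e.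
Qed.

Lemma bilin_0r (V M : lmodType C) (Y : V -> M -> int -> M) :
  bilinearY Y -> forall u n, Y u 0 n = 0.
Proof.
move=> hb u n; have [_ h2] := hb n; have := h2 1 u 0 0.
rewrite !scale1r addr0 => e.
by apply/(addrI (Y u 0 n)); rewrite addr0 -e.
Qed.

Lemma hconst_lin (X : lmodType C) (a : C) (u u' : X) :
  hconst (a *: u + u') = hadd (hscale (cst a) (hconst u)) (hconst u').
Proof.
apply: functional_extensionality => i; rewrite /hadd hscale_cst /hconst.
by case: eqP => _; rewrite ?scaler0 ?addr0.
Qed.


Lemma sum_closed (Q : zmodType) (T : Q -> Prop) : T 0 ->
  (forall a b, T a -> T b -> T (a + b)) ->
  forall n (z : 'I_n -> Q), (forall j, T (z j)) -> T (\sum_(j < n) z j).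
Proof.
move=> h0 hadd; elim=> [|n IH] z hz; first by rewrite big_ord0.
by rewrite big_ord_recr; apply: hadd => //; apply: IH.
Qed.

Lemma exists_maxset (T : finType) (P : {set T} -> Prop) : P set0 ->
  exists A, P A /\ forall x, x \notin A -> ~ P (x |: A).
Proof.
move=> h0; apply: NNPP => hno.
have key : forall k, exists A, P A /\ (k <= #|A|)%N.
  elim=> [|k [A [hA hk]]]; first by exists set0.
  have : ~ (forall x, x \notin A -> ~ P (x |: A)) by move=> hh; apply: hno; exists A.
  move=> /not_all_ex_not [x hx].
  have hxA : x \notin A := @not_imply_elim _ _ hx.
  exists (x |: A); split; first by apply: NNPP; apply: (@not_imply_elim2 _ _ hx).
  by rewrite cardsU1 hxA.
have [A [_ hA]] := key (#|T|.+1).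
by have := max_card (mem A); rewrite -/#|A|; lia.
Qed.

Section ModLemmas.
Variables (V Q : lmodType C) (Y : V -> Q -> int -> Q).
Hypothesis hb : bilinearY Y.

Lemma Y_add u q q' n : Y u (q + q') n = Y u q n + Y u q' n.
Proof. by have [_ h] := hb n; have := h 1 u q q'; rewrite !scale1r. Qed.
Lemma Y_scale u a q n : Y u (a *: q) n = a *: Y u q n.
Proof.
have [_ h] := hb n; have := h a u q 0; rewrite !addr0 => ->.
by rewrite (bilin_0r hb) addr0.
Qed.
Lemma Y_opp u q n : Y u (- q) n = - Y u q n.
Proof. by rewrite -scaleN1r Y_scale scaleN1r. Qed.
Lemma Y_sum u n K (z : 'I_K -> Q) : Y u (\sum_(j < K) z j) n = \sum_(j < K) Y u (z j) n.
Proof.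
elim: K z => [|K IH] z; first by rewrite !big_ord0 (bilin_0r hb).
by rewrite !big_ord_recr Y_add IH.
Qed.

Variable T : Q -> Prop.
Hypothesis hT : submodule Y T.
Lemma sm0 : T 0. Proof. by case: hT. Qed.
Lemma smadd a b : T a -> T b -> T (a + b). Proof. by case: hT => _ h _ _; apply: h. Qed.
Lemma smscale c a : T a -> T (c *: a). Proof. by case: hT => _ _ h _; apply: h. Qed.
Lemma smY u a n : T a -> T (Y u a n). Proof. by case: hT => _ _ _ h; apply: h. Qed.
Lemma smopp a : T a -> T (- a). Proof. by move=> h; rewrite -scaleN1r; apply: smscale. Qed.
Lemma smsum K (z : 'I_K -> Q) : (forall j, T (z j)) -> T (\sum_(j < K) z j).
Proof. by apply: sum_closed; [apply: sm0 | apply: smadd]. Qed.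
End ModLemmas.
Section Main.
Variables (V0 : lmodType C) (vac : V0) (YV : V0 -> V0 -> int -> V0).
Hypothesis HV : is_nlva vac YV.
Variables (W : lmodType C) (YW : hser V0 -> hser W -> int -> hser W).
Hypothesis HW : is_hmodule vac YV YW.

Lemma Hlw n u : hlinear (fun w => YW u w n). Proof. by case: HW. Qed.
Lemma Hlu n w : hlinear (fun u => YW u w n). Proof. by case: HW. Qed.

Lemma YW_cong k u u' w w' n : hcongr k u u' -> hcongr k w w' ->
  hcongr k (YW u w n) (YW u' w' n).
Proof.
move=> hu hw; apply: hcongr_trans.
  exact: (hlin_cong (Hlu n w) hu).
exact: (hlin_cong (Hlw n u') hw).
Qed.

Lemma hext_const u v n : hext YV (hconst u) (hconst v) n = hconst (YV u v n).
Proof.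
have hb : bilinearY YV by case: HV.
apply: functional_extensionality => i; rewrite /hext /hconst.
case: i => [|i]; first by rewrite big_ord1.
rewrite big1 // => j _; case: eqP => hj.
  by rewrite hj subn0; apply: bilin_0r.
by apply: bilin_0l.
Qed.

Section Quot.
Variables (Q : lmodType C) (m : nat) (lift : Q -> hser W) (tr : hser W -> Q).
Hypothesis tr_lift : forall q, tr (lift q) = q.
Hypothesis tr_cong : forall x y, hcongr m.+1 x y -> tr x = tr y.
Hypothesis lift_tr : forall x, hcongr m.+1 (lift (tr x)) x.
Hypothesis tr_sum : forall K (c : 'I_K -> C) (z : 'I_K -> hser W),
  tr (fun i => \sum_(j < K) c j *: z j i) = \sum_(j < K) c j *: tr (z j).

Lemma tr_add x y : tr (hadd x y) = tr x + tr y.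
Proof.
have -> : hadd x y = (fun i => \sum_(j < 2) (fun j : 'I_2 => 1) j *:
     (fun j : 'I_2 => if j == ord0 then x else y) j i).
  by apply: functional_extensionality => i; rewrite !big_ord_recr big_ord0 /= add0r !scale1r.
by rewrite tr_sum !big_ord_recr big_ord0 /= add0r !scale1r.
Qed.

Lemma tr_scl a x : tr (hscale (cst a) x) = a *: tr x.
Proof.
have -> : hscale (cst a) x = (fun i => \sum_(j < 1) (fun j : 'I_1 => a) j *:
     (fun j : 'I_1 => x) j i).
  by apply: functional_extensionality => i; rewrite big_ord1 hscale_cst.
by rewrite tr_sum big_ord1.
Qed.

Lemma tr_zero : tr (hzero W) = 0.
Proof.
have -> : hzero W = hscale (cst 0) (hzero W).
  by apply: functional_extensionality => i; rewrite hscale_cst scale0r.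
by rewrite tr_scl scale0r.
Qed.

Lemma lift_lin a q q' :
  hcongr m.+1 (lift (a *: q + q')) (hadd (hscale (cst a) (lift q)) (lift q')).
Proof.
have -> : a *: q + q' = tr (hadd (hscale (cst a) (lift q)) (lift q')).
  by rewrite tr_add tr_scl !tr_lift.
exact: lift_tr.
Qed.

Definition YQ (u : V0) (q : Q) (n : int) : Q := tr (YW (hconst u) (lift q) n).

Lemma YQ_module : is_module vac YV YQ.
Proof.
have [_ _ Htr Hvac Has] := HW.
split.
- move=> n; split.
    move=> a u u' w; rewrite /YQ hconst_lin (hlin_add (Hlu n _)).
    by rewrite (hlin_scale (Hlu n _)) tr_add tr_scl.
  move=> a u w w'; rewrite /YQ.
  rewrite (tr_cong (YW_cong n (@hcongr_refl _ _ _) (lift_lin a w w'))).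
  by rewrite (hlin_add (Hlw n _)) (hlin_scale (Hlw n _)) tr_add tr_scl.
- move=> u w; have [N hN] := Htr (hconst u) (lift w) m.+1.
  by exists N => n hn; rewrite /YQ (tr_cong (hN n hn)) tr_zero.
- move=> w n; rewrite /YQ Hvac; case: eqP => _; first by rewrite tr_lift.
  exact: tr_zero.
- move=> u v w; have [l hl] := Has (hconst u) (hconst v) (lift w) m.+1.
  exists l => a b; have [K0 hK0] := hl a b; exists K0 => K hK.
  have := tr_cong (hK0 K hK).
  rewrite /hassoc_lhs /hassoc_rhs !tr_sum /assoc_lhs /assoc_rhs => e.
  transitivity (\sum_(k < K) gbin (a + (k : nat)%:Z) k *:
     tr (YW (hconst u) (YW (hconst v) (lift w) ((k : nat)%:Z - 1 - b))
            (l%:Z - 1 - (k : nat)%:Z - a))).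
    apply: eq_bigr => k _; congr (_ *: _); rewrite /YQ; apply: tr_cong.
    by apply: YW_cong => //; apply: lift_tr.
  rewrite e; apply: eq_bigr => j _; congr (_ *: _).
  by rewrite /YQ hext_const.
Qed.

End Quot.

(* ---- instance 1 : W itself, mod h ---- *)
Definition Y1 (u : V0) (w : W) (n : int) : W := YW (hconst u) (hconst w) n 0%N.

Lemma Y1_module : is_module vac YV Y1.
Proof.
apply: (@YQ_module W 0 (@hconst W) (fun x => x 0%N)) => //.
- by move=> x y h; apply: h.
- by move=> x i; rewrite ltnS leqn0 => /eqP ->.
Qed.

Definition QF (m : nat) : lmodType C := {ffun 'I_m.+1 -> W}.
Definition liftF m (q : QF m) : hser W :=
  fun i => if (i < m.+1)%N then q (inord i) else 0.
Definition trF m (x : hser W) : QF m := [ffun i : 'I_m.+1 => x i].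

Lemma liftF_add m (q q' : QF m) i : liftF (q + q') i = liftF q i + liftF q' i.
Proof. by rewrite /liftF; case: ifP; rewrite ?ffunE ?addr0. Qed.
Lemma liftF_scale m a (q : QF m) i : liftF (a *: q) i = a *: liftF q i.
Proof. by rewrite /liftF; case: ifP; rewrite ?ffunE ?scaler0. Qed.
Lemma liftF_opp m (q : QF m) i : liftF (- q) i = - liftF q i.
Proof. by rewrite /liftF; case: ifP; rewrite ?ffunE ?oppr0. Qed.
Lemma liftF_zero m i : liftF (0 : QF m) i = 0.
Proof. by rewrite /liftF; case: ifP; rewrite ?ffunE. Qed.
Lemma liftF_sum m K (z : 'I_K -> QF m) i :
  liftF (\sum_(j < K) z j) i = \sum_(j < K) liftF (z j) i.
Proof.
elim: K z => [|K IH] z; first by rewrite !big_ord0 liftF_zero.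
by rewrite !big_ord_recr liftF_add IH.
Qed.

Lemma trF_lift m (q : QF m) : trF m (liftF q) = q.
Proof. by apply/ffunP => i; rewrite ffunE /liftF ltn_ord inord_val. Qed.
Lemma trF_cong m x y : hcongr m.+1 x y -> trF m x = trF m y.
Proof. by move=> h; apply/ffunP => i; rewrite !ffunE h. Qed.
Lemma liftF_tr m x : hcongr m.+1 (liftF (trF m x)) x.
Proof. by move=> i hi; rewrite /liftF hi ffunE inordK. Qed.
Lemma trF_sum m K (c : 'I_K -> C) (z : 'I_K -> hser W) :
  trF m (fun i => \sum_(j < K) c j *: z j i) = \sum_(j < K) c j *: trF m (z j).
Proof.
apply/ffunP => i; rewrite ffunE sum_ffunE; apply: eq_bigr => j _.
by rewrite ffunE ffunE.
Qed.

Definition YF m (u : V0) (q : QF m) (n : int) : QF m :=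
  trF m (YW (hconst u) (liftF q) n).

Lemma YF_module m : is_module vac YV (@YF m).
Proof.
apply: (@YQ_module (QF m) m (@liftF m) (@trF m)).
- exact: trF_lift.
- exact: trF_cong.
- exact: liftF_tr.
- exact: trF_sum.
Qed.

Lemma liftF_YF m u (q : QF m) n : hcongr m.+1 (liftF (YF u q n)) (YW (hconst u) (liftF q) n).
Proof. exact: liftF_tr. Qed.

Section Lift.
Variable S : W -> Prop.
Hypothesis HS : simple_submodule Y1 S.
Hypothesis HCR : forall (M : lmodType C) (YM : V0 -> M -> int -> M),
      is_module vac YV YM -> completely_reducible YM.

Definition Good m (sg : W -> hser W) :=
  [/\ forall a s s', S s -> S s' ->
        hcongr m.+1 (sg (a *: s + s')) (hadd (hscale (cst a) (sg s)) (sg s')),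
      forall s, S s -> sg s 0%N = s &
      forall u s n, S s -> hcongr m.+1 (sg (Y1 u s n)) (YW (hconst u) (sg s) n)].

Lemma Good0 : Good 0 (@hconst W).
Proof.
split.
- by move=> a s s' _ _; rewrite hconst_lin.
- by [].
- move=> u s n _ i; rewrite ltnS leqn0 => /eqP ->; by [].
Qed.

Lemma S_sm : submodule Y1 S. Proof. by case: HS. Qed.
Lemma Y1_bil : bilinearY Y1. Proof. by case: Y1_module. Qed.

Lemma step m sg : Good m sg -> exists sg', Good m.+1 sg' /\
   (forall s, S s -> hcongr m.+1 (sg' s) (sg s)).
Proof.
move=> [G1 G2 G3].
have [_ [s0 [Ss0 s0nz]] Smin] := HS.
have HQ := YF_module m.+1.
have hbQ : bilinearY (@YF m.+1) by case: HQ.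
have [I [Sd [Hsimp Hspan _]]] := HCR HQ.
have Sdsm : forall i, submodule (@YF m.+1) (Sd i) by move=> i; case: (Hsimp i).
have sig0 : hcongr m.+1 (sg 0) (hzero W).
  move=> i hi; have := G1 1 0 0 (sm0 S_sm) (sm0 S_sm) i hi.
  rewrite scale1r addr0 /hadd hscale_cst scale1r => e.
  by apply/(addrI (sg 0 i)); rewrite addr0 /hzero -e.
pose P q := exists s, S s /\ hcongr m.+1 ((liftF (m:=m.+1)) q) (sg s).
pose K q := hcongr m.+1 ((liftF (m:=m.+1)) q) (hzero W).
have Pwit : forall q s, S s -> hcongr m.+1 ((liftF (m:=m.+1)) q) (sg s) -> s = (liftF (m:=m.+1)) q 0%N.
  by move=> q s Ss h; rewrite h // G2.
have Plin : forall a q q', P q -> P q' -> P (a *: q + q').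
  move=> a q q' [s [Ss hs]] [s' [Ss' hs']]; exists (a *: s + s'); split.
    by exact: (smadd S_sm (smscale S_sm a Ss) Ss').
  move=> i hi; rewrite (G1 a s s' Ss Ss' i hi) liftF_add liftF_scale /hadd hscale_cst.
  by rewrite hs // hs'.
have KP : forall q, K q -> P q.
  by move=> q hq; exists 0; split; [apply: (sm0 S_sm) | move=> i hi; rewrite hq // sig0].
have K0 : K 0 by move=> i hi; rewrite liftF_zero.
have P0 : P 0 by apply: KP.
have Padd : forall q q', P q -> P q' -> P (q + q').
  by move=> q q' hq hq'; rewrite -[q]scale1r; apply: Plin.
have Pscale : forall a q, P q -> P (a *: q).
  by move=> a q hq; rewrite -[a *: q]addr0; apply: Plin.
have Kadd : forall q q', K q -> K q' -> K (q + q').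
  by move=> q q' hq hq' i hi; rewrite liftF_add hq // hq' // addr0.
have Kscale : forall a q, K q -> K (a *: q).
  by move=> a q hq i hi; rewrite liftF_scale hq // scaler0.
have KY : forall u q n, K q -> K (YF u q n).
  move=> u q n hq; apply: hcongr_trans; first exact: (hcongr_le (leqnSn _) (liftF_YF u q n)).
  rewrite -(hlin_zero (Hlw n (hconst u))).
  by apply: YW_cong => //.
have PY : forall u q n, P q -> P (YF u q n).
  move=> u q n [s [Ss hs]]; exists (Y1 u s n); split; first exact: (smY S_sm u n Ss).
  apply: hcongr_trans; first exact: (hcongr_le (leqnSn _) (liftF_YF u q n)).
  apply: hcongr_trans; first by apply: (YW_cong n (@hcongr_refl _ _ (hconst u)) hs).
  by apply: hcongr_sym; apply: G3.
pose x := trF m.+1 (sg s0).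
have Px : P x by exists s0; split => //; apply: (hcongr_le (leqnSn _)); apply: liftF_tr.
have x0 : (liftF (m:=m.+1)) x 0%N = s0 by rewrite liftF_tr // G2.
have [n [f [y [_ Hy xsum]]]] := Hspan x.
pose inJ (J : {set 'I_n}) q := exists z : 'I_n -> QF m.+1,
  [/\ forall j, Sd (f j) (z j), forall j, j \notin J -> z j = 0 & q = \sum_(j < n) z j].
pose good J := forall q, K q -> inJ J q -> q = 0.
have good0 : good set0.
  move=> q _ [z [_ hz ->]]; apply: big1 => j _; apply: hz; by rewrite in_set0.
have [J [gJ maxJ]] := exists_maxset good0.
have inJ0 : forall J, inJ J 0.
  by move=> J'; exists (fun _ => 0); split => // [j|]; [apply: sm0 (Sdsm _) | rewrite big1].
have inJlin : forall J a q q', inJ J q -> inJ J q' -> inJ J (a *: q + q').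
  move=> J' a q q' [z [hz1 hz2 ->]] [z' [hz1' hz2' ->]].
  exists (fun j => a *: z j + z' j); split.
  - by move=> j; exact: (smadd (Sdsm (f j)) (smscale (Sdsm (f j)) _ (hz1 j)) (hz1' j)).
  - by move=> j hj; rewrite hz2 // hz2' // scaler0 addr0.
  - by rewrite big_split /= scaler_sumr.
have inJY : forall J u q n', inJ J q -> inJ J (YF u q n').
  move=> J' u q n' [z [hz1 hz2 ->]]; exists (fun j => YF u (z j) n'); split.
  - by move=> j; exact: (smY (Sdsm (f j)) u n' (hz1 j)).
  - by move=> j hj; rewrite hz2 // (bilin_0r hbQ).
  - by rewrite (Y_sum hbQ).
have claim : forall j, exists l, exists a, [/\ K l, inJ J a & y j = l + a].
  move=> j; case: (boolP (j \in J)) => hj.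
    exists 0, (y j); split; [exact: K0 | | by rewrite add0r].
    exists (fun i => if i == j then y j else 0); split.
    + by move=> i; case: eqP => [->|_]; [apply: Hy | apply: sm0 (Sdsm _)].
    + by move=> i hi; case: eqP => // ei; move: hi; rewrite ei hj.
    + by rewrite (bigD1 j) //= eqxx big1 ?addr0 // => i /negPf ->.
  have ngood := maxJ j hj.
  have [q [Kq [[z [hz1 hz2 qz]] qnz]]] : exists q, K q /\ inJ (j |: J) q /\ q <> 0.
    apply: NNPP => hh; apply: ngood => q Kq iq; apply: NNPP => qnz.
    by apply: hh; exists q.
  pose a' := \sum_(i < n) (if i == j then 0 else z i).
  have ia' : inJ J a'.
    exists (fun i => if i == j then 0 else z i); split => //.
    + by move=> i; case: eqP => _; [apply: sm0 (Sdsm _) | apply: hz1].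
    + move=> i hi; case: eqP => // ei; apply: hz2.
      by rewrite in_setU1 negb_or; apply/andP; split => //; apply/eqP.
  have qa : q = z j + a'.
    rewrite qz /a' (bigD1 j) //= [X in _ = _ + X](bigD1 j) //= eqxx add0r.
    by congr (_ + _); apply: eq_bigr => i /negPf ->.
  pose T w := Sd (f j) w /\ exists l a, [/\ K l, inJ J a & w = l + a].
  have Tsm : submodule (@YF m.+1) T.
    split.
    - split; first exact: sm0 (Sdsm _).
      by exists 0, 0; split => //; rewrite addr0.
    - move=> w1 w2 [h1 [l1 [a1 [k1 i1 e1]]]] [h2 [l2 [a2 [k2 i2 e2]]]].
      split; first exact: (smadd (Sdsm (f j)) h1 h2).
      exists (l1 + l2), (a1 + a2); split; [exact: Kadd | | by rewrite e1 e2 addrACA].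
      by rewrite -[a1]scale1r; apply: inJlin.
    - move=> c w [h1 [l1 [a1 [k1 i1 e1]]]]; split; first exact: (smscale (Sdsm (f j)) c h1).
      exists (c *: l1), (c *: a1); split; [exact: Kscale | | by rewrite e1 scalerDr].
      by rewrite -[c *: a1]addr0; apply: inJlin.
    - move=> u w n' [h1 [l1 [a1 [k1 i1 e1]]]]; split; first exact: (smY (Sdsm (f j)) u n' h1).
      exists (YF u l1 n'), (YF u a1 n'); split; [exact: KY | exact: inJY | by rewrite e1 (Y_add hbQ)].
  have [_ _ Tmin] := Hsimp (f j).
  have [T0|Tall] := Tmin T Tsm (fun w h => proj1 h).
    exfalso; apply: qnz.
    have zj0 : z j = 0.
      apply: T0; split; first exact: hz1.
      exists q, (- a'); split => //; first by rewrite -scaleN1r -[_ *: a']addr0; apply: inJlin.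
      by rewrite qa addrK.
    by apply: gJ => //; rewrite qa zj0 add0r.
  by have [_ [l [a [kl ia ->]]]] := Tall _ (Hy j); exists l, a.
have [lf [af hla]] : exists lf af : 'I_n -> QF m.+1,
    forall j, [/\ K (lf j), inJ J (af j) & y j = lf j + af j].
  exists (fun j => proj1_sig (constructive_indefinite_description _ (claim j))).
  exists (fun j => proj1_sig (constructive_indefinite_description _
      (proj2_sig (constructive_indefinite_description _ (claim j))))).
  move=> j; exact: (proj2_sig (constructive_indefinite_description _
      (proj2_sig (constructive_indefinite_description _ (claim j))))).
pose L := \sum_(j < n) lf j; pose A := \sum_(j < n) af j.
have KL : K L by apply: (sum_closed K0 Kadd) => j; case: (hla j).
have iA : inJ J A.
  apply: (sum_closed (inJ0 J)); last by move=> j; case: (hla j).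
  by move=> a b ha hb'; rewrite -[a]scale1r; apply: inJlin.
have xLA : x = L + A.
  by rewrite xsum /L /A -big_split; apply: eq_bigr => j _; case: (hla j).
have PA : P A.
  have -> : A = (-1) *: L + x by rewrite xLA scaleN1r addKr.
  by apply: Plin => //; apply: KP.
have A0 : liftF A 0%N = s0.
  have -> : A = (-1) *: L + x by rewrite xLA scaleN1r addKr.
  by rewrite liftF_add liftF_scale KL // scaler0 add0r x0.
have c0 : forall u (q : QF m.+1) n', liftF (YF u q n') 0%N = Y1 u (liftF q 0%N) n'.
  move=> u q n'; rewrite (liftF_YF u q n' (ltn0Sn _)).
  have h1 : hcongr 1 (liftF q) (hconst (liftF q 0%N)).
    by move=> i; rewrite ltnS leqn0 => /eqP ->.
  exact: (YW_cong n' (@hcongr_refl _ 1 (hconst u)) h1 (ltn0Sn 0)).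
pose T' s := S s /\ exists q, [/\ P q, inJ J q & liftF q 0%N = s].
have Tsm' : submodule Y1 T'.
  split.
  - split; first exact: (sm0 S_sm).
    by exists 0; split; [exact: P0 | apply: inJ0 | rewrite liftF_zero].
  - move=> w1 w2 [h1 [q1 [p1 i1 e1]]] [h2 [q2 [p2 i2 e2]]].
    split; first exact: (smadd S_sm h1 h2).
    exists (q1 + q2); split; [exact: Padd | | by rewrite liftF_add e1 e2].
    by rewrite -[q1]scale1r; apply: inJlin.
  - move=> c w [h1 [q1 [p1 i1 e1]]]; split; first exact: (smscale S_sm c h1).
    exists (c *: q1); split; [exact: Pscale | | by rewrite liftF_scale e1].
    by rewrite -[c *: q1]addr0; apply: inJlin => //; apply: inJ0.
  - move=> u w n' [h1 [q1 [p1 i1 e1]]]; split; first exact: (smY S_sm u n' h1).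
    exists (YF u q1 n'); split; [exact: PY | exact: inJY | by rewrite c0 e1].
have [T0|Tall] := Smin T' Tsm' (fun w h => proj1 h).
  by exfalso; apply: s0nz; apply: T0; split => //; exists A.
have uniq : forall q q', P q -> inJ J q -> P q' -> inJ J q' ->
    liftF q 0%N = liftF q' 0%N -> q = q'.
  move=> q q' pq iq pq' iq' e.
  have pd : P ((-1) *: q' + q) by apply: Plin.
  have id : inJ J ((-1) *: q' + q) by apply: inJlin.
  have [sd [Ssd hsd]] := pd.
  have esd := Pwit _ _ Ssd hsd.
  rewrite liftF_add liftF_scale e scaleN1r addNr in esd.
  have Kd : K ((-1) *: q' + q).
    by move=> i hi; rewrite hsd // esd sig0.
  have := gJ _ Kd id; rewrite scaleN1r => /eqP; rewrite addrC subr_eq0 => /eqP //.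
have [nsel hnsel] : exists nsel : W -> QF m.+1, forall s, S s ->
    [/\ P (nsel s), inJ J (nsel s) & liftF (nsel s) 0%N = s].
  have h : forall s, exists q, S s -> [/\ P q, inJ J q & liftF q 0%N = s].
    move=> s; case: (classic (S s)) => Ss.
      by have [_ [q hq]] := Tall s Ss; exists q.
    by exists 0.
  exists (fun s => proj1_sig (constructive_indefinite_description _ (h s))).
  by move=> s Ss; exact: (proj2_sig (constructive_indefinite_description _ (h s)) Ss).
exists (fun s => liftF (nsel s)); split; first split.
- move=> a s s' Ss Ss'.
  have Sas : S (a *: s + s') by exact: (smadd S_sm (smscale S_sm a Ss) Ss').
  have [p1 i1 e1] := hnsel _ Ss; have [p2 i2 e2] := hnsel _ Ss'; have [p3 i3 e3] := hnsel _ Sas.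
  have e : nsel (a *: s + s') = a *: nsel s + nsel s'.
    apply: uniq => //; [exact: Plin | exact: inJlin | by rewrite liftF_add liftF_scale e1 e2 e3].
  by rewrite e => i _; rewrite liftF_add liftF_scale /hadd hscale_cst.
- by move=> s Ss; case: (hnsel s Ss).
- move=> u s n' Ss.
  have SY : S (Y1 u s n') by exact: (smY S_sm u n' Ss).
  have [p1 i1 e1] := hnsel _ Ss; have [p2 i2 e2] := hnsel _ SY.
  have e : nsel (Y1 u s n') = YF u (nsel s) n'.
    apply: uniq => //; [exact: PY | exact: inJY | by rewrite c0 e1 e2].
  by rewrite e; exact: liftF_YF.
- move=> s Ss; have [[s' [Ss' h']] _ c1] := hnsel s Ss.
  have es := Pwit _ _ Ss' h'; rewrite c1 in es; by subst s'.
Qed.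

Fixpoint iterF (F : nat -> (W -> hser W) -> (W -> hser W)) (m : nat) : W -> hser W :=
  match m with 0 => @hconst W | m'.+1 => F m' (iterF F m') end.

Lemma limit : exists sg : W -> hser W, [/\
   forall a s s', S s -> S s' -> sg (a *: s + s') = hadd (hscale (cst a) (sg s)) (sg s'),
   forall s, S s -> sg s 0%N = s &
   forall u s n, S s -> sg (Y1 u s n) = YW (hconst u) (sg s) n].
Proof.
have hstep : forall m sg, exists sg', Good m sg -> Good m.+1 sg' /\
   (forall s, S s -> hcongr m.+1 (sg' s) (sg s)).
  move=> m sg; case: (classic (Good m sg)) => hg.
    by have [sg' h] := step hg; exists sg'.
  by exists sg.
pose F m sg := proj1_sig (constructive_indefinite_description _ (hstep m sg)).
have FP : forall m sg, Good m sg -> Good m.+1 (F m sg) /\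
   (forall s, S s -> hcongr m.+1 (F m sg s) (sg s)).
  by move=> m sg; exact: (proj2_sig (constructive_indefinite_description _ (hstep m sg))).
have Gs : forall m, Good m (iterF F m).
  by elim=> [|m IH]; [exact: Good0 | exact: (proj1 (FP _ _ IH))].
have Cs : forall m s, S s -> hcongr m.+1 (iterF F m.+1 s) (iterF F m s).
  by move=> m s Ss; exact: (proj2 (FP _ _ (Gs m)) s Ss).
have Cgen : forall m d s, S s -> hcongr m.+1 (iterF F (m + d) s) (iterF F m s).
  move=> m d s Ss; elim: d => [|d IH]; first by rewrite addn0.
  rewrite addnS; apply: hcongr_trans IH.
  by apply: (hcongr_le _ (Cs _ s Ss)); rewrite ltnS leq_addr.
pose sg s i := iterF F i s i.
have key : forall m s, S s -> hcongr m.+1 (sg s) (iterF F m s).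
  move=> m s Ss i hi; rewrite /sg.
  have -> : m = (i + (m - i))%N by rewrite ltnS in hi; lia.
  by rewrite (Cgen i (m - i)%N s Ss i (ltnSn i)).
exists sg; split.
- move=> a s s' Ss Ss'; apply: functional_extensionality => i.
  have [G1 _ _] := Gs i.
  by rewrite /sg (G1 a s s' Ss Ss' i (ltnSn i)) /hadd !hscale_cst.
- by [].
- move=> u s n Ss; apply: functional_extensionality => i.
  have [_ _ G3] := Gs i.
  rewrite /sg (G3 u s n Ss i (ltnSn i)).
  have := YW_cong n (@hcongr_refl _ i.+1 (hconst u)) (hcongr_sym (key i s Ss)).
  by move=> h; rewrite (h i (ltnSn i)).
Qed.


Section Final.
Variable sg : W -> hser W.
Hypothesis L1 : forall a s s', S s -> S s' ->
  sg (a *: s + s') = hadd (hscale (cst a) (sg s)) (sg s').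
Hypothesis L2 : forall s, S s -> sg s 0%N = s.
Hypothesis L3 : forall u s n, S s -> sg (Y1 u s n) = YW (hconst u) (sg s) n.

Lemma sg0 : sg 0 = hzero W.
Proof.
apply: functional_extensionality => i.
have := congr1 (fun f => f i) (L1 1 (sm0 S_sm) (sm0 S_sm)).
rewrite scale1r addr0 /= /hadd hscale_cst scale1r => e.
by apply/(addrI (sg 0 i)); rewrite addr0 /hzero -e.
Qed.

Lemma sg_add s s' i : S s -> S s' -> sg (s + s') i = sg s i + sg s' i.
Proof.
move=> hs hs'; have := congr1 (fun f => f i) (L1 1 hs hs').
by rewrite scale1r /= /hadd hscale_cst scale1r.
Qed.

Lemma sg_scale a s i : S s -> sg (a *: s) i = a *: sg s i.
Proof.
move=> hs; have := congr1 (fun f => f i) (L1 a hs (sm0 S_sm)).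
by rewrite addr0 sg0 /= /hadd hscale_cst /hzero addr0.
Qed.

Lemma sg_sum K (c : 'I_K -> C) (z : 'I_K -> W) i : (forall l, S (z l)) ->
  sg (\sum_(l < K) c l *: z l) i = \sum_(l < K) c l *: sg (z l) i.
Proof.
elim: K c z => [|K IH] c z hz; first by rewrite !big_ord0 sg0.
rewrite !big_ord_recr /= sg_add ?sg_scale ?IH //.
  by apply: (smsum S_sm) => l; apply: (smscale S_sm).
by apply: (smscale S_sm).
Qed.

Lemma sg_sum1 K (z : 'I_K -> W) i : (forall l, S (z l)) ->
  sg (\sum_(l < K) z l) i = \sum_(l < K) sg (z l) i.
Proof.
move=> hz; have := sg_sum (fun _ => 1) i hz.
by under eq_bigr do rewrite scale1r; under [in RHS]eq_bigr do rewrite scale1r.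
Qed.

Definition gS (s : hser W) : hser W := fun j => \sum_(i < j.+1) sg (s i) (j - i)%N.
Definition Sser (s : hser W) := forall i, S (s i).

Lemma gS_top s j : Sser s ->
  gS s j = s j + \sum_(i < j) sg (s i) (j - i)%N.
Proof. by move=> hs; rewrite /gS big_ord_recr /= subnn L2 // addrC. Qed.

Lemma gS_dep k s s' : hcongr k s s' -> hcongr k (gS s) (gS s').
Proof.
move=> h j hj; apply: eq_bigr => i _; rewrite h //.
by apply: leq_ltn_trans hj; rewrite -ltnS.
Qed.

Lemma tri_congr k s s' : Sser s -> Sser s' -> hcongr k (gS s) (gS s') -> hcongr k s s'.
Proof.
move=> hs hs' h; elim: k h => [|k IH] h; first by [].
have IH' := IH (hcongr_le (leqnSn k) h).
move=> j; rewrite ltnS leq_eqVlt => /orP [/eqP ->|hj]; last exact: IH'.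
have := h k (ltnSn k); rewrite !gS_top //.
have -> : \sum_(i < k) sg (s i) (k - i)%N = \sum_(i < k) sg (s' i) (k - i)%N.
  by apply: eq_bigr => i _; rewrite IH'.
by move/addIr.
Qed.

Lemma gS_inj s s' : Sser s -> Sser s' -> gS s = gS s' -> s = s'.
Proof.
move=> hs hs' e; apply: functional_extensionality => i.
by apply: (tri_congr (k := i.+1) hs hs') => //; rewrite e.
Qed.

Lemma gS_add s s' : Sser s -> Sser s' -> gS (hadd s s') = hadd (gS s) (gS s').
Proof.
move=> hs hs'; apply: functional_extensionality => j.
by rewrite /gS /hadd -big_split; apply: eq_bigr => i _; rewrite sg_add.
Qed.

Lemma Sser_scale c s : Sser s -> Sser (hscale c s).
Proof. by move=> hs i; apply: (smsum S_sm) => l; apply: (smscale S_sm). Qed.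

Lemma gS_scale c s : Sser s -> gS (hscale c s) = hscale c (gS s).
Proof.
move=> hs; apply: functional_extensionality => j.
rewrite /gS /hscale.
transitivity (\sum_(i < j.+1) \sum_(l < i.+1) c l *: sg (s (i - l)%N) (j - i)%N).
  by apply: eq_bigr => i _; rewrite sg_sum.
rewrite (sum_tri j (fun l m p => c l *: sg (s m) p)).
by apply: eq_bigr => l _; rewrite scaler_sumr.
Qed.

Lemma Sser_hext u s n : Sser s -> Sser (hext Y1 u s n).
Proof. by move=> hs i; apply: (smsum S_sm) => l; apply: (smY S_sm). Qed.

Lemma gS_expand s j : Sser s ->
  hcongr j.+1 (gS s) (fun p => \sum_(m < j.+1) hscale (hpow m) (sg (s m)) p).
Proof.
move=> hs p hp; rewrite /gS (sum_widen (fun m => sg (s m) (p - m)%N) hp).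
by apply: eq_bigr => m _; rewrite hscale_pow.
Qed.

Lemma gS_Y u s n : Sser s -> gS (hext Y1 u s n) = YW u (gS s) n.
Proof.
move=> hs; apply: functional_extensionality => j.
rewrite {1}/gS /hext.
transitivity (\sum_(i < j.+1) \sum_(l < i.+1)
   YW (hconst (u l)) (sg (s (i - l)%N)) n (j - i)%N).
  apply: eq_bigr => i _; rewrite sg_sum1; last by move=> l; apply: (smY S_sm); apply: hs.
  by apply: eq_bigr => l _; rewrite L3 //; apply: hs.
rewrite (sum_tri j (fun l m p => YW (hconst (u l)) (sg (s m)) n p)).
have e1 := @hlin_expand _ _ _ (Hlu n (gS s)) u (fun i => hconst (u i)) (fun i => hexpand_const (j:=i) u) j.
simpl in e1; rewrite e1.
apply: eq_bigr => l _.
have e2 := @hlin_expand _ _ _ (Hlw n (hconst (u l))) (gS s) (fun m => sg (s m)) (fun i => gS_expand (j:=i) hs) (j - l)%N.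
by simpl in e2; rewrite e2.
Qed.

Definition Tset (w : hser W) := exists s, Sser s /\ w = gS s.

Lemma Tset_sub : hsubmodule YW Tset.
Proof.
have Szero : Sser (hzero W) by move=> i; exact: (sm0 S_sm).
split.
- split.
    exists (hzero W); split => //; apply: functional_extensionality => j.
    by rewrite /gS big1 // => i _; rewrite sg0.
  move=> x y [s [hs ->]] [s' [hs' ->]]; exists (hadd s s'); split.
    by move=> i; exact: (smadd S_sm).
  by rewrite gS_add.
- move=> c x [s [hs ->]]; exists (hscale c s); split; first exact: Sser_scale.
  by rewrite gS_scale.
- move=> u x n [s [hs ->]]; exists (hext Y1 u s n); split; first exact: Sser_hext.
  by rewrite gS_Y.
- move=> x hx.
  have hx' : forall k, exists s, Sser s /\ hcongr k x (gS s).
    by move=> k; have [y [[s [hs ->]] h]] := hx k; exists s.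
  pose sk k := proj1_sig (constructive_indefinite_description _ (hx' k)).
  have hsk : forall k, Sser (sk k) /\ hcongr k x (gS (sk k)).
    by move=> k; exact: (proj2_sig (constructive_indefinite_description _ (hx' k))).
  have cmp : forall i k, (i < k)%N -> sk k i = sk i.+1 i.
    move=> i k hik.
    have h : hcongr i.+1 (gS (sk k)) (gS (sk i.+1)).
      apply: hcongr_trans; first by apply: hcongr_sym; apply: (hcongr_le hik (proj2 (hsk k))).
      exact: (proj2 (hsk i.+1)).
    exact: (tri_congr (proj1 (hsk k)) (proj1 (hsk i.+1)) h (ltnSn i)).
  exists (fun i => sk i.+1 i); split; first by move=> i; apply: (proj1 (hsk i.+1)).
  apply: functional_extensionality => j.
  rewrite (proj2 (hsk j.+1) j (ltnSn j)).
  apply: (gS_dep (k := j.+1)) => // i hi.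
  by rewrite cmp.
- move=> x n _ [s [hs e]].
  have s0 : hcongr n s (hzero W).
    apply: tri_congr => //.
    have -> : gS (hzero W) = hzero W.
      by apply: functional_extensionality => j; rewrite /gS big1 // => i _; rewrite sg0.
    by move=> i hi; rewrite -e hpow_small.
  pose s' := fun i => s (i + n)%N.
  have hs' : Sser s' by move=> i; apply: hs.
  have es : s = hscale (hpow n) s'.
    apply: functional_extensionality => i; rewrite hscale_pow /s'.
    by case: leqP => h; [rewrite subnK | rewrite s0].
  exists s'; split => //.
  apply: functional_extensionality => i.
  have := congr1 (fun f => f (i + n)%N) e.
  by rewrite es gS_scale // !hscale_pow leq_addl addnK.
Qed.

End Final.

Lemma conclusion (Hsimple : simple_hmodule YW) :
  exists (M : lmodType C) (YM : V0 -> M -> int -> M),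
    [/\ is_module vac YV YM, simple_module YM & hmodule_iso YW (hext YM)].
Proof.
have [sg [L1 L2 L3]] := limit.
have Tsub := Tset_sub L1 L2 L3.
have [_ [s0 [Ss0 s0nz]] Smin] := HS.
have Sc0 : Sser (hconst s0).
  by move=> i; rewrite /hconst; case: eqP => _ //; exact: (sm0 S_sm).
have [T0|Tall] := (proj2 Hsimple) _ Tsub.
  exfalso; apply: s0nz.
  have := congr1 (fun f => f 0%N) (T0 _ (ex_intro _ (hconst s0) (conj Sc0 erefl))).
  by rewrite /= (gS_top L2) // big_ord0 addr0.
have Sall : forall w, S w.
  move=> w; have [s [hs e]] := Tall (hconst w).
  have := congr1 (fun f => f 0%N) e.
  rewrite /= (gS_top L2) // big_ord0 addr0 /hconst /= => ->; apply: hs.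
have Sserall : forall s, Sser s by move=> s i; apply: Sall.
exists W, Y1; split.
- exact: Y1_module.
- split.
  + by split.
  + by exists s0.
  + move=> T hT _; have [h|h] := Smin T hT (fun x _ => Sall x); [left|right] => //.
    by move=> x _; apply: h; apply: Sall.
- have surj : forall w, exists s, w = gS sg s.
    by move=> w; have [s [_ e]] := Tall w; exists s.
  pose f w := proj1_sig (constructive_indefinite_description _ (surj w)).
  have fK : forall w, w = gS sg (f w).
    by move=> w; exact: (proj2_sig (constructive_indefinite_description _ (surj w))).
  exists f; split.
  + split.
    * move=> x y; apply: (gS_inj L2) => //.
      by rewrite (gS_add L1) // -!fK.
    * move=> c x; apply: (gS_inj L2) => //.
      by rewrite (gS_scale L1) // -!fK.
  + exists (gS sg) => [w|s]; first by rewrite -fK.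
    by apply: (gS_inj L2) => //; rewrite -fK.
  + move=> u w n; apply: (gS_inj L2) => //.
    by rewrite (gS_Y L1 L3) // -!fK.
Qed.
End Lift. End Main.

Theorem lemma3p5 (V0 : lmodType C) (vac : V0) (YV : V0 -> V0 -> int -> V0)
  (HV : is_nlva vac YV)
  (HCR : forall (M : lmodType C) (YM : V0 -> M -> int -> M),
      is_module vac YV YM -> completely_reducible YM)
  (W : lmodType C) (YW : hser V0 -> hser W -> int -> hser W)
  (HW : is_hmodule vac YV YW) (Hsimple : simple_hmodule YW) :
  exists (M : lmodType C) (YM : V0 -> M -> int -> M),
    [/\ is_module vac YV YM, simple_module YM &
        hmodule_iso YW (hext YM)].
Proof.
have [[w wnz] _] := Hsimple.
have [i wi] : exists i, w i <> 0.
  apply: NNPP => h; apply: wnz; apply: functional_extensionality => i.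
  by apply: NNPP => hi; apply: h; exists i.
have [I [Sd [Hsimp Hspan _]]] := HCR _ _ (Y1_module HV HW).
have [n [f [y [_ Hy e]]]] := Hspan (w i).
case: n f y Hy e => [|n] f y Hy e.
  by exfalso; apply: wi; rewrite e big_ord0.
exact: (conclusion HV HW (Hsimp (f ord0)) HCR Hsimple).
Qed.
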